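(* (i) Suppose $\mathbf A$ is a category with small coproducts whose initial object admits no morphisms into it from non-initial objects (e.g. $\mathbf A$ a variety with no zeroary operations), and $\mathbf D$ is a variety with at least one zeroary operation. Then for every $\mathbf D$-coalgebra $R$ in $\mathbf A$, $|R|$ is the initial object of $\mathbf A$, so the functor $\mathbf A(R,-)$ sends every object to the one-element $\mathbf D$-algebra; in particular this trivial functor is the initial object of $\mathrm{Rep}(\mathbf A,\mathbf D)$. (ii) Suppose $\mathbf A$ is a category with small coproducts whose initial object is also a final object (e.g. a variety with exactly one derived zeroary operation), and $\mathbf D$ is any variety. Then $\mathrm{Rep}(\mathbf A,\mathbf D)$ has an initial object, namely the functor sending every object to the one-element $\mathbf D$-algebra, represented by the initial-final object of $\mathbf A$ with its unique $\mathbf D$-coalgebra structure. (iii) Suppose $\mathbf A$ is a category with small coproducts and a final object such that the unique morphism from the initial to the final object is an epimorphism but not an isomorphism (e.g. a variety with more than one derived zeroary operation), and $\mathbf D$ is a variety with at most one derived zeroary operation. Then $\mathrm{Rep}(\mathbf A,\mathbf D)$ has an initial object $F$: (a) if $\mathbf D$ has no zeroary operations, $F$ is represented by the final object of $\mathbf A$ with its unique $\mathbf D$-coalgebra structure, and $F$ sends an object of $\mathbf A$ to the one-element $\mathbf D$-algebra if it admits a morphism from the final object, and to the empty $\mathbf D$-algebra otherwise; (b) if $\mathbf D$ has exactly one derived zeroary operation, $F$ is represented by the initial object of $\mathbf A$ with its unique $\mathbf D$-coalgebra structure, and sends every object to the one-element algebra. Consequently, when $\mathbf A$ is a variety, the initial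 object of $\mathrm{Rep}(\mathbf A,\mathbf D)$ can take values that are not all algebras with $0$ or $1$ elements only if either neither $\mathbf A$ nor $\mathbf D$ has zeroary operations, or both $\mathbf A$ and $\mathbf D$ have more than one derived zeroary operation.
   Context: A variety $\mathbf D$ is specified by a small set $\Omega_{\mathbf D}$ of operation symbols with cardinal arities $\mathrm{ari}(\alpha)$ (possibly infinite) and a set of identities. A derived zeroary operation is a zeroary term built from the primitive operations. $\coprod_\kappa X$ denotes the $\kappa$-fold copower of $X$. An $\Omega_{\mathbf D}$-coalgebra $R$ in a category $\mathbf A$ with coproducts is an object $|R|$ with co-operations $\alpha^R:|R|\to\coprod_{\mathrm{ari}(\alpha)}|R|$ ($\alpha\in\Omega_{\mathbf D}$); these make each hom-set $\mathbf A(|R|,A)$ an $\Omega_{\mathbf D}$-algebra $\mathbf A(R,A)$. $R$ is a $\mathbf D$-coalgebra if every $\mathbf A(R,A)$ satisfies the identities of $\mathbf D$ (equivalently, the tuple of coprojections into the appropriate copower satisfies them). $\mathrm{Rep}(\mathbf A,\mathbf D)$ is the full subcategory of $\mathbf{Cat}(\mathbf A,\mathbf D)$ consisting of functors $\mathbf A(R,-)$ with $R$ a $\mathbf D$-coalgebra; it is equivalent to the opposite of the category $\mathrm{Coalg}(\mathbf A,\mathbf D)$ of $\mathbf D$-coalgebras (morphisms are morphisms of underlying objects commuting with co-operations). *)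

(* Defs.v *)
From Stdlib Require Import ProofIrrelevance.

Record Category := {
  Obj :> Type;
  Hom : Obj -> Obj -> Type;
  idm : forall X : Obj, Hom X X;
  comp : forall X Y Z : Obj, Hom Y Z -> Hom X Y -> Hom X Z;
  comp_assoc : forall (X Y Z W : Obj) (h : Hom Z W) (g : Hom Y Z) (f : Hom X Y),
      comp X Z W h (comp X Y Z g f) = comp X Y W (comp Y Z W h g) f;
  comp_id_l : forall (X Y : Obj) (f : Hom X Y), comp X Y Y (idm Y) f = f;
  comp_id_r : forall (X Y : Obj) (f : Hom X Y), comp X X Y f (idm X) = f
}.
Arguments Hom {c} X Y.
Arguments idm {c} X.
Arguments comp {c} {X Y Z} _ _.

Definition IsInitial (C : Category) (X : Obj C) : Prop :=
  forall Y : Obj C, exists f : Hom X Y, forall g : Hom X Y, g = f.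
Definition IsFinal (C : Category) (X : Obj C) : Prop :=
  forall Y : Obj C, exists f : Hom Y X, forall g : Hom Y X, g = f.
Definition Epi (C : Category) (X Y : Obj C) (f : Hom X Y) : Prop :=
  forall (Z : Obj C) (g h : Hom Y Z), comp g f = comp h f -> g = h.
Definition Iso (C : Category) (X Y : Obj C) (f : Hom X Y) : Prop :=
  exists g : Hom Y X, comp g f = idm X /\ comp f g = idm Y.

Record Coproducts (C : Category) := {
  coprod : forall (I : Type), (I -> Obj C) -> Obj C;
  coinj : forall (I : Type) (X : I -> Obj C) (i : I), Hom (X i) (coprod I X);
  copair : forall (I : Type) (X : I -> Obj C) (Y : Obj C),
      (forall i : I, Hom (X i) Y) -> Hom (coprod I X) Y;
  copair_inj : forall (I : Type) (X : I -> Obj C) (Y : Obj C)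
      (f : forall i : I, Hom (X i) Y) (i : I),
      comp (copair I X Y f) (coinj I X i) = f i;
  copair_unique : forall (I : Type) (X : I -> Obj C) (Y : Obj C)
      (f : forall i : I, Hom (X i) Y) (h : Hom (coprod I X) Y),
      (forall i : I, comp h (coinj I X i) = f i) -> h = copair I X Y f
}.
Arguments coprod {C} c I X.
Arguments coinj {C} c {I X} i.
Arguments copair {C} c {I X Y} f.

Record Sig := { op : Type; ar : op -> Type }.

Inductive term (S : Sig) (V : Type) : Type :=
| tvar : V -> term S V
| tapp : forall o : op S, (ar S o -> term S V) -> term S V.
Arguments tvar {S V} v.
Arguments tapp {S V} o ts.

Record Variety := {
  vsig : Sig;
  ax : Type;
  ax_vars : ax -> Type;
  ax_lhs : forall e : ax, term vsig (ax_vars e);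
  ax_rhs : forall e : ax, term vsig (ax_vars e)
}.

Definition OpsOn (S : Sig) (A : Type) : Type := forall o : op S, (ar S o -> A) -> A.

Fixpoint eval {S : Sig} {A : Type} (I : OpsOn S A) {V : Type} (env : V -> A)
  (t : term S V) : A :=
  match t with
  | tvar v => env v
  | tapp o ts => I o (fun k => eval I env (ts k))
  end.

Definition Satisfies (D : Variety) (A : Type) (I : OpsOn (vsig D) A) : Prop :=
  forall (e : ax D) (env : ax_vars D e -> A),
    eval I env (ax_lhs D e) = eval I env (ax_rhs D e).

Definition NoZeroary (D : Variety) : Prop :=
  forall o : op (vsig D), inhabited (ar (vsig D) o).
Definition HasZeroary (D : Variety) : Prop :=
  exists o : op (vsig D), ar (vsig D) o -> False.

(* derived zeroary operations = closed terms, compared in all D-algebras *)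
Definition ceval {S : Sig} {A : Type} (I : OpsOn S A) (t : term S Empty_set) : A :=
  eval I (fun e : Empty_set => match e with end) t.

Definition AtMostOneDerivedConst (D : Variety) : Prop :=
  forall (A : Type) (I : OpsOn (vsig D) A), Satisfies D A I ->
    forall t1 t2 : term (vsig D) Empty_set, ceval I t1 = ceval I t2.
Definition ExactlyOneDerivedConst (D : Variety) : Prop :=
  inhabited (term (vsig D) Empty_set) /\ AtMostOneDerivedConst D.
Definition ManyDerivedConst (D : Variety) : Prop :=
  exists (t1 t2 : term (vsig D) Empty_set) (A : Type) (I : OpsOn (vsig D) A),
    Satisfies D A I /\ ceval I t1 <> ceval I t2.

Definition CoOps (C : Category) (CP : Coproducts C) (S : Sig) (X : Obj C) : Type :=
  forall o : op S, Hom X (coprod CP (ar S o) (fun _ => X)).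

(* the Omega-algebra structure on the hom-set A(R,Y) *)
Definition hom_ops {C : Category} {CP : Coproducts C} {S : Sig} {X : Obj C}
  (s : CoOps C CP S X) (Y : Obj C) : OpsOn S (Hom X Y) :=
  fun o fs => comp (copair CP (X := fun _ => X) fs) (s o).

Definition IsDCoalg (C : Category) (CP : Coproducts C) (D : Variety) (X : Obj C)
  (s : CoOps C CP (vsig D) X) : Prop :=
  forall Y : Obj C, Satisfies D (Hom X Y) (hom_ops s Y).

Definition IsRepMor (C : Category) (CP : Coproducts C) (D : Variety)
  (X : Obj C) (s : CoOps C CP (vsig D) X) (Y : Obj C) (t : CoOps C CP (vsig D) Y)
  (eta : forall Z : Obj C, Hom X Z -> Hom Y Z) : Prop :=
  (forall (Z W : Obj C) (g : Hom Z W) (f : Hom X Z), eta W (comp g f) = comp g (eta Z f)) /\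
  (forall (Z : Obj C) (o : op (vsig D)) (fs : ar (vsig D) o -> Hom X Z),
      eta Z (hom_ops s Z o fs) = hom_ops t Z o (fun k => eta Z (fs k))).

Definition RepInitial (C : Category) (CP : Coproducts C) (D : Variety)
  (X : Obj C) (s : CoOps C CP (vsig D) X) : Prop :=
  IsDCoalg C CP D X s /\
  forall (Y : Obj C) (t : CoOps C CP (vsig D) Y), IsDCoalg C CP D Y t ->
    exists eta : forall Z : Obj C, Hom X Z -> Hom Y Z,
      IsRepMor C CP D X s Y t eta /\
      forall eta', IsRepMor C CP D X s Y t eta' ->
        forall (Z : Obj C) (f : Hom X Z), eta' Z f = eta Z f.

Definition Singleton (T : Type) : Prop := exists x : T, forall y : T, y = x.
Definition EmptyT (T : Type) : Prop := T -> False.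

Record AlgObj (V : Variety) := {
  acar : Type;
  aops : OpsOn (vsig V) acar;
  asat : Satisfies V acar aops
}.
Arguments acar {V} a.
Arguments aops {V} a.

Definition IsAlgHom (V : Variety) (A B : AlgObj V) (f : acar A -> acar B) : Prop :=
  forall (o : op (vsig V)) (xs : ar (vsig V) o -> acar A),
    f (aops A o xs) = aops B o (fun k => f (xs k)).

Definition AlgHom (V : Variety) (A B : AlgObj V) : Type :=
  { f : acar A -> acar B | IsAlgHom V A B f }.

Definition alg_id (V : Variety) (A : AlgObj V) : AlgHom V A A.
Proof. exists (fun x => x). intros o xs. reflexivity. Defined.

Definition alg_comp (V : Variety) (A B E : AlgObj V)
  (g : AlgHom V B E) (f : AlgHom V A B) : AlgHom V A E.
Proof.
  exists (fun x => proj1_sig g (proj1_sig f x)).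
  intros o xs. rewrite (proj2_sig f). apply (proj2_sig g).
Defined.

Definition VarCat (V : Variety) : Category.
Proof.
  refine {| Obj := AlgObj V; Hom := AlgHom V; idm := alg_id V;
            comp := alg_comp V |}.
  - intros. apply ProofIrrelevanceTheory.subset_eq_compat. reflexivity.
  - intros X Y [f pf]. apply ProofIrrelevanceTheory.subset_eq_compat. reflexivity.
  - intros X Y [f pf]. apply ProofIrrelevanceTheory.subset_eq_compat. reflexivity.
Defined.

(* Main.v *)
Require Import Defs.
From Stdlib Require Import ProofIrrelevance Classical FunctionalExtensionality IndefiniteDescription.

Lemma init_sub (C : Category) (X : Obj C) : IsInitial C X -> forall Y (a b : Hom X Y), a = b.
Proof. intros H Y a b. destruct (H Y) as [f Hf]. rewrite (Hf a), (Hf b). reflexivity. Qed.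
Lemma final_sub (C : Category) (X : Obj C) : IsFinal C X -> forall Y (a b : Hom Y X), a = b.
Proof. intros H Y a b. destruct (H Y) as [f Hf]. rewrite (Hf a), (Hf b). reflexivity. Qed.

Lemma coprod_empty_initial (C : Category) (CP : Coproducts C) (I : Type) (HI : I -> False)
  (X : I -> Obj C) : IsInitial C (coprod CP I X).
Proof.
  intros Y. exists (copair CP (fun i => match HI i with end)).
  intros g. apply copair_unique. intros i. destruct (HI i).
Qed.

Lemma copair_comp (C : Category) (CP : Coproducts C) (I : Type) (X : I -> Obj C) (Y W : Obj C)
  (g : Hom Y W) (fs : forall i, Hom (X i) Y) :
  comp g (copair CP fs) = copair CP (fun i => comp g (fs i)).
Proof.
  apply copair_unique. intros i. rewrite <- comp_assoc. rewrite copair_inj. reflexivity.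
Qed.

Lemma post_hom (C : Category) (CP : Coproducts C) (S : Sig) (Y : Obj C) (t : CoOps C CP S Y)
  (W W' : Obj C) (g : Hom W W') (o : op S) (fs : ar S o -> Hom Y W) :
  comp g (hom_ops t W o fs) = hom_ops t W' o (fun k => comp g (fs k)).
Proof.
  unfold hom_ops. rewrite comp_assoc. rewrite copair_comp. reflexivity.
Qed.

Lemma eval_hom (S : Sig) (A B : Type) (IA : OpsOn S A) (IB : OpsOn S B) (h : A -> B) :
  (forall o xs, h (IA o xs) = IB o (fun k => h (xs k))) ->
  forall V (env : V -> A) (t : term S V), h (eval IA env t) = eval IB (fun v => h (env v)) t.
Proof.
  intros Hh V env t. induction t as [v|o ts IH]; simpl; [reflexivity|].
  rewrite Hh. f_equal. extensionality k. apply IH.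
Qed.

Lemma ceval_hom (S : Sig) (A B : Type) (IA : OpsOn S A) (IB : OpsOn S B) (h : A -> B) :
  (forall o xs, h (IA o xs) = IB o (fun k => h (xs k))) ->
  forall (t : term S Empty_set), h (ceval IA t) = ceval IB t.
Proof.
  intros Hh t. unfold ceval. rewrite (eval_hom S A B IA IB h Hh).
  f_equal. extensionality e. destruct e.
Qed.

Definition homcond (C : Category) (CP : Coproducts C) (D : Variety)
  (X : Obj C) (s : CoOps C CP (vsig D) X) (Y : Obj C) (t : CoOps C CP (vsig D) Y)
  (v : Hom Y X) : Prop :=
  forall (Z : Obj C) o fs, comp (hom_ops s Z o fs) v = hom_ops t Z o (fun k => comp (fs k) v).

Lemma rep_init_v (C : Category) (CP : Coproducts C) (D : Variety)
  (X : Obj C) (s : CoOps C CP (vsig D) X) :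
  IsDCoalg C CP D X s ->
  (forall Y t, IsDCoalg C CP D Y t -> exists v : Hom Y X,
     homcond C CP D X s Y t v /\ forall w, homcond C CP D X s Y t w -> w = v) ->
  RepInitial C CP D X s.
Proof.
  intros HX H. split; [exact HX|]. intros Y t HY.
  destruct (H Y t HY) as [v [Hv Hu]].
  exists (fun Z f => comp f v). split; [split|].
  - intros Z W g f. rewrite comp_assoc. reflexivity.
  - intros Z o fs. apply Hv.
  - intros eta' [Hn Hh].
    assert (Hf : forall Z f, eta' Z f = comp f (eta' X (idm X))).
    { intros Z f. rewrite <- Hn. rewrite comp_id_r. reflexivity. }
    assert (Hw : eta' X (idm X) = v).
    { apply Hu. intros Z o fs. rewrite <- Hf. rewrite Hh. f_equal.
      extensionality k. apply Hf. }
    intros Z f. rewrite Hf, Hw. reflexivity.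
Qed.

Lemma sub_DCoalg (C : Category) (CP : Coproducts C) (D : Variety)
  (X : Obj C) (s : CoOps C CP (vsig D) X) :
  (forall Y (a b : Hom X Y), a = b) -> IsDCoalg C CP D X s.
Proof. intros H Y e env. apply H. Qed.

Lemma rep_init_sub (C : Category) (CP : Coproducts C) (D : Variety)
  (X : Obj C) (s : CoOps C CP (vsig D) X) :
  IsDCoalg C CP D X s ->
  (forall Z (a b : Hom X Z), a = b) ->
  (forall Y t, IsDCoalg C CP D Y t -> inhabited (Hom Y X) /\ forall (v w : Hom Y X), v = w) ->
  RepInitial C CP D X s.
Proof.
  intros HX Hs H. apply rep_init_v; [exact HX|]. intros Y t HY.
  destruct (H Y t HY) as [[v] Hv]. exists v. split.
  - intros Z o fs.
    assert (E : (fun k => comp (fs k) v) = (fun k => comp (hom_ops s Z o fs) v)).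
    { extensionality k. f_equal. apply Hs. }
    rewrite E. rewrite <- (post_hom C CP (vsig D) Y t X Z (hom_ops s Z o fs) o (fun _ => v)).
    f_equal. apply Hv.
  - intros w _. apply Hv.
Qed.

Lemma rep_transfer (C : Category) (CP : Coproducts C) (D : Variety)
  (X : Obj C) (s : CoOps C CP (vsig D) X) (Z : Obj C) (sz : CoOps C CP (vsig D) Z) :
  RepInitial C CP D X s -> RepInitial C CP D Z sz ->
  (forall W (a b : Hom Z W), a = b) -> forall W (a b : Hom X W), a = b.
Proof.
  intros [HXc HXi] [HZc HZi] Hsub.
  destruct (HXi Z sz HZc) as [e1 [[n1 h1] _]].
  destruct (HZi X s HXc) as [e2 [[n2 h2] _]].
  destruct (HXi X s HXc) as [e0 [_ Hu]].
  assert (E1 : forall W a, e2 W (e1 W a) = e0 W a).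
  { apply Hu. split.
    - intros. rewrite n1, n2. reflexivity.
    - intros. rewrite h1, h2. reflexivity. }
  assert (E2 : forall W (a : Hom X W), a = e0 W a).
  { apply (Hu (fun W a => a)). split; intros; reflexivity. }
  intros W a b. rewrite (E2 W a), (E2 W b), <- !E1. f_equal. apply Hsub.
Qed.

Definition pick_inh {A : Type} (H : inhabited A) : A :=
  proj1_sig (constructive_indefinite_description (fun _ : A => True)
    (match H with inhabits a => ex_intro _ a I end)).

Definition init_map {C : Category} {X : Obj C} (H : IsInitial C X) (Y : Obj C) : Hom X Y :=
  proj1_sig (constructive_indefinite_description _ (H Y)).

Lemma part_i (C : Category) (CP : Coproducts C) (D : Variety) (I0 : Obj C) :
     IsInitial C I0 ->
     (forall (X : Obj C), Hom X I0 -> IsInitial C X) ->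
     HasZeroary D ->
     forall (X : Obj C) (s : CoOps C CP (vsig D) X),
       IsDCoalg C CP D X s ->
       IsInitial C X /\ (forall Y : Obj C, Singleton (Hom X Y)) /\
       RepInitial C CP D X s.
Proof.
  intros HI Hto [o Ho].
  assert (Hall : forall Y (t : CoOps C CP (vsig D) Y), IsInitial C Y).
  { intros Y t. apply Hto.
    exact (comp (init_map (coprod_empty_initial C CP _ Ho (fun _ => Y)) I0) (t o)). }
  intros X s Hs. split; [eauto|split].
  - intros Y. destruct (Hall X s Y) as [f Hf]. exists f. exact Hf.
  - apply rep_init_sub; [exact Hs| |].
    + apply init_sub. eauto.
    + intros Y t _. split.
      * destruct (Hall Y t X) as [f _]. constructor. exact f.
      * apply init_sub. eauto.
Qed.

Lemma part_ii (C : Category) (CP : Coproducts C) (D : Variety) (Z : Obj C) :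
     IsInitial C Z -> IsFinal C Z ->
     exists s : CoOps C CP (vsig D) Z,
       IsDCoalg C CP D Z s /\
       (forall s' : CoOps C CP (vsig D) Z, IsDCoalg C CP D Z s' ->
          forall o, s' o = s o) /\
       RepInitial C CP D Z s /\
       (forall Y : Obj C, Singleton (Hom Z Y)).
Proof.
  intros HI HF.
  exists (fun o => init_map HI _). 
  assert (Hs : forall W (a b : Hom Z W), a = b) by (apply init_sub; exact HI).
  split; [apply sub_DCoalg; exact Hs|]. split; [intros; apply Hs|]. split.
  - apply rep_init_sub; [apply sub_DCoalg; exact Hs|exact Hs|].
    intros Y t _. split.
    + destruct (HF Y) as [f _]. constructor. exact f.
    + apply final_sub. exact HF.
  - intros Y. destruct (HI Y) as [f Hf]. exists f. exact Hf.
Qed.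

Lemma part_iiia (C : Category) (CP : Coproducts C) (D : Variety) (I0 T : Obj C)
     (u : Hom I0 T) :
     IsInitial C I0 -> IsFinal C T -> Epi C I0 T u ->
     NoZeroary D ->
        exists s : CoOps C CP (vsig D) T,
          IsDCoalg C CP D T s /\
          (forall s' : CoOps C CP (vsig D) T, IsDCoalg C CP D T s' ->
             forall o, s' o = s o) /\
          RepInitial C CP D T s /\
          (forall Y : Obj C,
             (inhabited (Hom T Y) -> Singleton (Hom T Y)) /\
             (~ inhabited (Hom T Y) -> EmptyT (Hom T Y))).
Proof.
  intros HI HF He HN.
  assert (Hs : forall W (a b : Hom T W), a = b).
  { intros W a b. apply He. apply init_sub. exact HI. }
  exists (fun o => coinj CP (X := fun _ : ar (vsig D) o => T) (pick_inh (HN o))).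
  split; [apply sub_DCoalg; exact Hs|]. split; [intros; apply Hs|]. split.
  - apply rep_init_sub; [apply sub_DCoalg; exact Hs|exact Hs|].
    intros Y t _. split.
    + destruct (HF Y) as [f _]. constructor. exact f.
    + apply final_sub. exact HF.
  - intros Y. split.
    + intros [f]. exists f. intros; apply Hs.
    + intros Hn f. apply Hn. constructor. exact f.
Qed.

Lemma part_iiib (C : Category) (CP : Coproducts C) (D : Variety) (I0 : Obj C) :
     IsInitial C I0 -> AtMostOneDerivedConst D ->
     ExactlyOneDerivedConst D ->
        exists s : CoOps C CP (vsig D) I0,
          IsDCoalg C CP D I0 s /\
          (forall s' : CoOps C CP (vsig D) I0, IsDCoalg C CP D I0 s' ->
             forall o, s' o = s o) /\
          RepInitial C CP D I0 s /\
          (forall Y : Obj C, Singleton (Hom I0 Y)).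
Proof.
  intros HI HA [[c] _].
  assert (Hs : forall W (a b : Hom I0 W), a = b) by (apply init_sub; exact HI).
  exists (fun o => init_map HI _).
  split; [apply sub_DCoalg; exact Hs|]. split; [intros; apply Hs|]. split.
  - apply rep_init_v; [apply sub_DCoalg; exact Hs|].
    intros Y t HY. exists (ceval (hom_ops t I0) c). split.
    + intros Z o fs.
      rewrite (ceval_hom _ _ _ (hom_ops t I0) (hom_ops t Z) (comp (hom_ops _ Z o fs))).
      2:{ intros o' xs. apply post_hom. }
      assert (E : (fun k => comp (fs k) (ceval (hom_ops t I0) c)) = (fun k => ceval (hom_ops t Z) c)).
      { extensionality k. apply ceval_hom. intros o' xs. apply post_hom. }
      rewrite E.
      change (hom_ops t Z o (fun _ => ceval (hom_ops t Z) c))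
        with (ceval (hom_ops t Z) (tapp o (fun _ => c))).
      apply HA. apply HY.
    + intros w Hw.
      assert (E := ceval_hom _ _ _ (hom_ops (fun o => init_map HI _) I0) (hom_ops t I0)
                     (fun g => comp g w) (Hw I0) c).
      simpl in E. rewrite <- E. rewrite (Hs _ _ (idm I0)). rewrite comp_id_l. reflexivity.
  - intros Y. destruct (HI Y) as [f Hf]. exists f. exact Hf.
Qed.

Lemma not_nozero (D : Variety) : ~ NoZeroary D -> exists o : op (vsig D), ar (vsig D) o -> False.
Proof.
  intros H. apply NNPP. intros Hn. apply H. intros o. apply NNPP. intros Hi.
  apply Hn. exists o. intros k. apply Hi. constructor. exact k.
Qed.

Lemma not_atmost (D : Variety) : ~ AtMostOneDerivedConst D -> ManyDerivedConst D.
Proof.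
  intros H. apply NNPP. intros Hn. apply H. intros A I HS t1 t2. apply NNPP. intros Hne.
  apply Hn. exists t1, t2, A, I. auto.
Qed.

Lemma zero_exactly (D : Variety) : AtMostOneDerivedConst D -> ~ NoZeroary D ->
  ExactlyOneDerivedConst D.
Proof.
  intros HA HN. destruct (not_nozero D HN) as [o Ho]. split; [|exact HA].
  constructor. exact (tapp o (fun k => match Ho k with end)).
Qed.

Lemma part_iii (C : Category) (CP : Coproducts C) (D : Variety) (I0 T : Obj C)
     (u : Hom I0 T) :
     IsInitial C I0 -> IsFinal C T -> Epi C I0 T u -> ~ Iso C I0 T u ->
     AtMostOneDerivedConst D ->
     (exists (X : Obj C) (s : CoOps C CP (vsig D) X), RepInitial C CP D X s) /\
     (NoZeroary D ->
        exists s : CoOps C CP (vsig D) T,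
          IsDCoalg C CP D T s /\
          (forall s' : CoOps C CP (vsig D) T, IsDCoalg C CP D T s' ->
             forall o, s' o = s o) /\
          RepInitial C CP D T s /\
          (forall Y : Obj C,
             (inhabited (Hom T Y) -> Singleton (Hom T Y)) /\
             (~ inhabited (Hom T Y) -> EmptyT (Hom T Y)))) /\
     (ExactlyOneDerivedConst D ->
        exists s : CoOps C CP (vsig D) I0,
          IsDCoalg C CP D I0 s /\
          (forall s' : CoOps C CP (vsig D) I0, IsDCoalg C CP D I0 s' ->
             forall o, s' o = s o) /\
          RepInitial C CP D I0 s /\
          (forall Y : Obj C, Singleton (Hom I0 Y))).
Proof.
  intros HI HF He _ HA. split; [|split].
  - destruct (classic (NoZeroary D)) as [HN|HN].
    + destruct (part_iiia C CP D I0 T u HI HF He HN) as [s [_ [_ [H _]]]]. eauto.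
    + destruct (part_iiib C CP D I0 HI HA (zero_exactly D HA HN)) as [s [_ [_ [H _]]]]. eauto.
  - intros HN; apply (part_iiia C CP D I0 T u); assumption.
  - intros HE; apply part_iiib; assumption.
Qed.

Lemma alghom_eq (V : Variety) (A B : AlgObj V) (f g : AlgHom V A B) :
  proj1_sig f = proj1_sig g -> f = g.
Proof. destruct f as [f pf], g as [g pg]. simpl. intros ->. f_equal. apply proof_irrelevance. Qed.

Definition unitAlg (V : Variety) : AlgObj V.
Proof.
  refine {| acar := unit; aops := fun _ _ => tt |}.
  intros e env. destruct (eval _ env (ax_lhs V e)), (eval _ env (ax_rhs V e)). reflexivity.
Defined.

Lemma unit_final (V : Variety) : IsFinal (VarCat V) (unitAlg V).
Proof.
  intros Y. unshelve eexists.
  - exists (fun _ => tt). intros o xs. reflexivity.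
  - intros g. apply alghom_eq. extensionality x. destruct (proj1_sig g x). reflexivity.
Qed.

Definition emptyOps (V : Variety) (HN : NoZeroary V) : OpsOn (vsig V) Empty_set :=
  fun o xs => False_rect _ (match HN o with inhabits k => match xs k with end end).

Definition emptyAlg (V : Variety) (HN : NoZeroary V) : AlgObj V.
Proof.
  refine {| acar := Empty_set; aops := emptyOps V HN |}.
  intros e env. destruct (eval (emptyOps V HN) env (ax_lhs V e)).
Defined.

Lemma zero_final (C : Category) (I T : Obj C) (v : Hom T I) :
  IsInitial C I -> IsFinal C T -> IsFinal C I.
Proof.
  intros HI HF W. destruct (HF W) as [w Hw]. destruct (HF I) as [u _].
  exists (comp v w). intros g.
  transitivity (comp (comp v u) g).
  - rewrite (init_sub C I HI I (comp v u) (idm I)). rewrite comp_id_l. reflexivity.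
  - rewrite <- comp_assoc. f_equal. apply Hw.
Qed.

Lemma consequence (VA D : Variety) (CP : Coproducts (VarCat VA)) (X : Obj (VarCat VA))
     (s : CoOps (VarCat VA) CP (vsig D) X) :
     RepInitial (VarCat VA) CP D X s ->
     (exists (Y : Obj (VarCat VA)) (f g : Hom X Y), f <> g) ->
     (NoZeroary VA /\ NoZeroary D) \/ (ManyDerivedConst VA /\ ManyDerivedConst D).
Proof.
  intros HR [Y [f [g Hfg]]].
  assert (Hne : ~ (forall W (a b : Hom X W), a = b)).
  { intros H. apply Hfg. apply H. }
  pose (I0 := coprod CP Empty_set (fun e => match e with end)).
  assert (HI0 : IsInitial (VarCat VA) I0)
    by (apply (coprod_empty_initial _ CP Empty_set (fun e => match e with end))).
  destruct (classic (NoZeroary VA)) as [HNA|HNA].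
  - left. split; [exact HNA|]. destruct (classic (NoZeroary D)) as [|HND]; [assumption|].
    exfalso.
    assert (Hto : forall (X' : Obj (VarCat VA)), Hom X' I0 -> IsInitial (VarCat VA) X').
    { intros X' m.
      pose (e := proj1_sig (comp (init_map HI0 (emptyAlg VA HNA : Obj (VarCat VA))) m)).
      intros W. unshelve eexists.
      - exists (fun x => match e x with end). intros o xs. destruct (e (aops X' o xs)).
      - intros h. apply alghom_eq. extensionality x. destruct (e x). }
    destruct (part_i (VarCat VA) CP D I0 HI0 Hto (not_nozero D HND) X s (proj1 HR))
      as [_ [Hsg _]].
    destruct (Hsg Y) as [h Hh]. apply Hfg. rewrite (Hh f), (Hh g). reflexivity.
  - destruct (not_nozero VA HNA) as [o0 Ho0].
    pose (cVA := tapp o0 (fun k => match Ho0 k with end) : term (vsig VA) Empty_set).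
    destruct (classic (AtMostOneDerivedConst VA)) as [HAA|HAA].
    + exfalso.
      assert (v : Hom (unitAlg VA : Obj (VarCat VA)) I0).
      { exists (fun _ => ceval (aops I0) cVA). intros o xs. simpl.
        change (aops I0 o (fun _ => ceval (aops I0) cVA))
          with (ceval (aops I0) (tapp o (fun _ => cVA))).
        apply HAA. apply asat. }
      assert (HF0 := zero_final _ _ _ v HI0 (unit_final VA)).
      destruct (part_ii (VarCat VA) CP D I0 HI0 HF0) as [sz [_ [_ [HRz Hsz]]]].
      apply Hne. apply (rep_transfer _ CP D X s I0 sz HR HRz).
      intros W a b. destruct (Hsz W) as [h Hh]. rewrite (Hh a), (Hh b). reflexivity.
    + right. split; [apply not_atmost; exact HAA|].
      destruct (classic (AtMostOneDerivedConst D)) as [HAD|HAD];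
        [exfalso|apply not_atmost; exact HAD].
      destruct (not_atmost VA HAA) as [t1 [t2 [A [IA [HSA Hne12]]]]].
      pose (T := unitAlg VA : Obj (VarCat VA)).
      pose (u := init_map HI0 T).
      pose (i0 := ceval (aops I0) cVA).
      assert (He : Epi (VarCat VA) I0 T u).
      { intros W a b Hab. apply alghom_eq. extensionality x. destruct x.
        assert (E : proj1_sig a (proj1_sig u i0) = proj1_sig b (proj1_sig u i0))
          by exact (f_equal (fun m => proj1_sig m i0) Hab).
        revert E. generalize (proj1_sig u i0). intros [] E. exact E. }
      assert (Hni : ~ Iso (VarCat VA) I0 T u).
      { intros [w [H1 _]].
        pose (Aalg := {| acar := A; aops := IA; asat := HSA |} : Obj (VarCat VA)).
        pose (h := init_map HI0 Aalg).
        assert (E1 := ceval_hom _ _ _ _ _ (proj1_sig h) (proj2_sig h) t1).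
        assert (E2 := ceval_hom _ _ _ _ _ (proj1_sig h) (proj2_sig h) t2).
        apply Hne12. simpl in E1, E2. rewrite <- E1, <- E2. f_equal.
        assert (Ec : forall x : acar I0, proj1_sig w (proj1_sig u x) = x).
        { intros x. exact (f_equal (fun m => proj1_sig m x) H1). }
        transitivity (proj1_sig w (proj1_sig u (ceval (aops I0) t1))); [symmetry; apply Ec|].
        transitivity (proj1_sig w (proj1_sig u (ceval (aops I0) t2))); [|apply Ec].
        f_equal. generalize (proj1_sig u (ceval (aops I0) t1)).
        generalize (proj1_sig u (ceval (aops I0) t2)). intros [] []. reflexivity. }
      apply Hne.
      destruct (classic (NoZeroary D)) as [HND|HND].
      * destruct (part_iiia _ CP D I0 T u HI0 (unit_final VA) He HND) as [sz [_ [_ [HRz Hsz]]]].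
        apply (rep_transfer _ CP D X s T sz HR HRz).
        intros W a b. destruct (Hsz W) as [Hin _]. destruct (Hin (inhabits a)) as [h Hh].
        rewrite (Hh a), (Hh b). reflexivity.
      * destruct (part_iiib _ CP D I0 HI0 HAD (zero_exactly D HAD HND)) as [sz [_ [_ [HRz Hsz]]]].
        apply (rep_transfer _ CP D X s I0 sz HR HRz).
        intros W a b. destruct (Hsz W) as [h Hh]. rewrite (Hh a), (Hh b). reflexivity.
Qed.

Theorem theorem2p1 :
  (* (i) *)
  (forall (C : Category) (CP : Coproducts C) (D : Variety) (I0 : Obj C),
     IsInitial C I0 ->
     (forall (X : Obj C), Hom X I0 -> IsInitial C X) ->
     HasZeroary D ->
     forall (X : Obj C) (s : CoOps C CP (vsig D) X),
       IsDCoalg C CP D X s ->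
       IsInitial C X /\ (forall Y : Obj C, Singleton (Hom X Y)) /\
       RepInitial C CP D X s)
  /\
  (* (ii) *)
  (forall (C : Category) (CP : Coproducts C) (D : Variety) (Z : Obj C),
     IsInitial C Z -> IsFinal C Z ->
     exists s : CoOps C CP (vsig D) Z,
       IsDCoalg C CP D Z s /\
       (forall s' : CoOps C CP (vsig D) Z, IsDCoalg C CP D Z s' ->
          forall o, s' o = s o) /\
       RepInitial C CP D Z s /\
       (forall Y : Obj C, Singleton (Hom Z Y)))
  /\
  (* (iii) *)
  (forall (C : Category) (CP : Coproducts C) (D : Variety) (I0 T : Obj C)
     (u : Hom I0 T),
     IsInitial C I0 -> IsFinal C T -> Epi C I0 T u -> ~ Iso C I0 T u ->
     AtMostOneDerivedConst D ->
     (exists (X : Obj C) (s : CoOps C CP (vsig D) X), RepInitial C CP D X s) /\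
     (NoZeroary D ->
        exists s : CoOps C CP (vsig D) T,
          IsDCoalg C CP D T s /\
          (forall s' : CoOps C CP (vsig D) T, IsDCoalg C CP D T s' ->
             forall o, s' o = s o) /\
          RepInitial C CP D T s /\
          (forall Y : Obj C,
             (inhabited (Hom T Y) -> Singleton (Hom T Y)) /\
             (~ inhabited (Hom T Y) -> EmptyT (Hom T Y)))) /\
     (ExactlyOneDerivedConst D ->
        exists s : CoOps C CP (vsig D) I0,
          IsDCoalg C CP D I0 s /\
          (forall s' : CoOps C CP (vsig D) I0, IsDCoalg C CP D I0 s' ->
             forall o, s' o = s o) /\
          RepInitial C CP D I0 s /\
          (forall Y : Obj C, Singleton (Hom I0 Y))))
  /\
  (* consequence, for A a variety *)
  (forall (VA D : Variety) (CP : Coproducts (VarCat VA)) (X : Obj (VarCat VA))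
     (s : CoOps (VarCat VA) CP (vsig D) X),
     RepInitial (VarCat VA) CP D X s ->
     (exists (Y : Obj (VarCat VA)) (f g : Hom X Y), f <> g) ->
     (NoZeroary VA /\ NoZeroary D) \/ (ManyDerivedConst VA /\ ManyDerivedConst D)).
Proof.
  split; [exact part_i|]. split; [exact part_ii|]. split; [exact part_iii|].
  exact consequence.
Qed.
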